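(* Let $p\in\mathbb{R}$, $K:=\{z=(v,m,\sigma,e)\in Z: v\otimes v-\sigma=e\,\mathrm{Id},\ m=(e+p)v\}$, and let $K'\subset K$ be compact. For any $z\in\operatorname{int}(K')^{co}$ there exists $\bar z\in\Lambda$ such that $[z-\bar z,z+\bar z]\subset\operatorname{int}(K')^{co}$ and $|\bar z|\ge\frac{1}{2N}d(z,K')$, where $N=\dim Z$.
   Context: $\mathcal S_0^{2\times2}$ is the space of traceless symmetric $2\times2$ matrices, $Z:=\mathbb{R}^2\times\mathbb{R}^2\times\mathcal S_0^{2\times2}\times\mathbb{R}$, $d$ is the Euclidean distance on $Z$, $(K')^{co}$ the convex hull. The wave cone is $\Lambda=\{\bar z=(\bar v,\bar m,\bar\sigma,\bar e)\in Z:\ (\bar v,\bar e)\neq0\text{ and there is }0\ne(\xi,c)\in\mathbb{R}^2\times\mathbb{R}\text{ with }(\bar\sigma+\bar e\,\mathrm{Id})\xi+c\bar v=0,\ \bar v\cdot\xi=0,\ \bar m\cdot\xi+c\bar e=0\}$. *)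

(* Defs.v *)
From HB Require Import structures.
From mathcomp Require Import all_boot all_order all_algebra.
From mathcomp Require Import all_classical all_reals all_analysis.
Set Implicit Arguments. Unset Strict Implicit. Unset Printing Implicit Defensive.
Import Order.TTheory GRing.Theory Num.Theory.
Import numFieldNormedType.Exports.
Local Open Scope classical_set_scope.
Local Open Scope ring_scope.

(* The space Z = R^2 x R^2 x S_0^{2x2} x R is represented by its coordinates
   in R^7 : z = (v1, v2, m1, m2, s11, s12, e), where the traceless symmetric
   matrix sigma is [[s11, s12], [s12, -s11]]. *)
Definition Z (R : realType) := 'rV[R]_7.
Definition dimZ : nat := 7.

Section Coords.
Variable R : realType.
Implicit Types z : Z R.

Definition zc z (k : nat) : R := z ord0 (inord k).
Definition vof z : 'rV[R]_2 := \row_(i < 2) zc z i.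
Definition mof z : 'rV[R]_2 := \row_(i < 2) zc z (2 + i).
Definition sigof z : 'M[R]_2 :=
  \matrix_(i < 2, j < 2)
    (if i == j then (if (i : nat) == 0%N then zc z 4 else - zc z 4) else zc z 5).
Definition eof z : R := zc z 6.

Definition znorm z : R :=
  Num.sqrt (\sum_(i < 2) (vof z ord0 i) ^+ 2 + \sum_(i < 2) (mof z ord0 i) ^+ 2
            + \sum_(i < 2) \sum_(j < 2) (sigof z i j) ^+ 2 + (eof z) ^+ 2).
Definition zdist z (A : set (Z R)) : R := inf [set znorm (z - k) | k in A].

Definition zinterior (A : set (Z R)) : set (Z R) :=
  [set z | exists2 r : R, 0 < r & forall w, znorm (w - z) < r -> A w].

Definition conv_hull (A : set (Z R)) : set (Z R) :=
  [set x | exists n (l : 'I_n -> R) (a : 'I_n -> Z R),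
      (forall i, 0 <= l i) /\ (forall i, A (a i)) /\
      \sum_(i < n) l i = 1 /\ x = \sum_(i < n) l i *: a i].

Definition Kset (p : R) : set (Z R) :=
  [set z | (vof z)^T *m vof z - sigof z = (eof z)%:M
           /\ mof z = (eof z + p) *: vof z].

Definition wave_cone : set (Z R) :=
  [set zb | (vof zb != 0 \/ eof zb != 0) /\
     exists (xi : 'cV[R]_2) (c : R), (xi != 0 \/ c != 0) /\
       (sigof zb + (eof zb)%:M) *m xi + c *: (vof zb)^T = 0 /\
       (vof zb *m xi) ord0 ord0 = 0 /\
       (mof zb *m xi) ord0 ord0 + c * eof zb = 0].
End Coords.

(* Main.v *)
Require Import Defs.
From HB Require Import structures.
From mathcomp Require Import all_boot all_order all_algebra.
From mathcomp Require Import all_classical all_reals all_analysis.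
From mathcomp Require Import ring lra.
Import Order.TTheory GRing.Theory Num.Theory.
Import numFieldNormedType.Exports.
Local Open Scope classical_set_scope.
Local Open Scope ring_scope.

Section S.
Variable R : realType.
Implicit Types x y z : Z R.

Lemma zcD x y k : zc (x + y) k = zc x k + zc y k.
Proof. by rewrite /zc mxE. Qed.
Lemma zcN x k : zc (- x) k = - zc x k.
Proof. by rewrite /zc mxE. Qed.
Lemma zcB x y k : zc (x - y) k = zc x k - zc y k.
Proof. by rewrite zcD zcN. Qed.
Lemma zcZ (c : R) x k : zc (c *: x) k = c * zc x k.
Proof. by rewrite /zc mxE. Qed.
Lemma zc0 k : zc (0 : Z R) k = 0.
Proof. by rewrite /zc mxE. Qed.

Definition Qf x := zc x 0 ^+ 2 + zc x 1 ^+ 2 + zc x 2 ^+ 2 + zc x 3 ^+ 2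
  + 2 * zc x 4 ^+ 2 + 2 * zc x 5 ^+ 2 + zc x 6 ^+ 2.

Lemma znormE x : znorm x = Num.sqrt (Qf x).
Proof.
rewrite /znorm /Qf /vof /mof /sigof /eof !big_ord_recr !big_ord0 /= !mxE /=.
congr Num.sqrt.
rewrite addn0 (_ : (2+1)%N = 3) // sqrrN; ring.
Qed.

Lemma cs7 (x0 x1 x2 x3 x4 x5 x6 y0 y1 y2 y3 y4 y5 y6 : R) :
  (x0*y0 + x1*y1 + x2*y2 + x3*y3 + 2*(x4*y4) + 2*(x5*y5) + x6*y6) ^+ 2 <=
  (x0^+2 + x1^+2 + x2^+2 + x3^+2 + 2*x4^+2 + 2*x5^+2 + x6^+2) *
  (y0^+2 + y1^+2 + y2^+2 + y3^+2 + 2*y4^+2 + 2*y5^+2 + y6^+2).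
Proof.
rewrite -subr_ge0.
have -> : (x0^+2 + x1^+2 + x2^+2 + x3^+2 + 2*x4^+2 + 2*x5^+2 + x6^+2) *
  (y0^+2 + y1^+2 + y2^+2 + y3^+2 + 2*y4^+2 + 2*y5^+2 + y6^+2) -
  (x0*y0 + x1*y1 + x2*y2 + x3*y3 + 2*(x4*y4) + 2*(x5*y5) + x6*y6) ^+ 2 =
 (x0*y1-x1*y0)^+2 + (x0*y2-x2*y0)^+2 + (x0*y3-x3*y0)^+2 + 2*(x0*y4-x4*y0)^+2 + 2*(x0*y5-x5*y0)^+2 + (x0*y6-x6*y0)^+2 + (x1*y2-x2*y1)^+2 + (x1*y3-x3*y1)^+2 + 2*(x1*y4-x4*y1)^+2 + 2*(x1*y5-x5*y1)^+2 + (x1*y6-x6*y1)^+2 + (x2*y3-x3*y2)^+2 + 2*(x2*y4-x4*y2)^+2 + 2*(x2*y5-x5*y2)^+2 + (x2*y6-x6*y2)^+2 + 2*(x3*y4-x4*y3)^+2 + 2*(x3*y5-x5*y3)^+2 + (x3*y6-x6*y3)^+2 + 4*(x4*y5-x5*y4)^+2 + 2*(x4*y6-x6*y4)^+2 + 2*(x5*y6-x6*y5)^+2 by ring.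
by repeat first [apply: sqr_ge0 | apply: addr_ge0 | apply: mulr_ge0; [lra|]].
Qed.

Lemma Qf_ge0 x : 0 <= Qf x.
Proof. by rewrite /Qf; repeat first [apply: sqr_ge0 | apply: addr_ge0 | apply: mulr_ge0; [lra|]]. Qed.

Lemma znorm_ge0 x : 0 <= znorm x.
Proof. by rewrite znormE sqrtr_ge0. Qed.

Lemma znorm0 : znorm (0 : Z R) = 0.
Proof. by rewrite znormE /Qf !zc0 expr0n /= !mulr0 !addr0 sqrtr0. Qed.

Lemma znormZ (c : R) x : znorm (c *: x) = `|c| * znorm x.
Proof.
rewrite !znormE /Qf !zcZ.
rewrite -sqrtr_sqr -sqrtrM ?sqr_ge0 //; congr Num.sqrt; ring.
Qed.

Lemma znormN x : znorm (- x) = znorm x.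
Proof. by rewrite -scaleN1r znormZ normrN normr1 mul1r. Qed.

Lemma znormD x y : znorm (x + y) <= znorm x + znorm y.
Proof.
rewrite !znormE.
have ha := Qf_ge0 x; have hb := Qf_ge0 y.
set sa := Num.sqrt (Qf x); set sb := Num.sqrt (Qf y).
have hsa : 0 <= sa by apply: sqrtr_ge0.
have hsb : 0 <= sb by apply: sqrtr_ge0.
have ea : sa ^+ 2 = Qf x by rewrite sqr_sqrtr.
have eb : sb ^+ 2 = Qf y by rewrite sqr_sqrtr.
rewrite -(ger0_norm (addr_ge0 hsa hsb)) -sqrtr_sqr ler_sqrt ?sqr_ge0 //.
have := cs7 (zc x 0) (zc x 1) (zc x 2) (zc x 3) (zc x 4) (zc x 5) (zc x 6)
  (zc y 0) (zc y 1) (zc y 2) (zc y 3) (zc y 4) (zc y 5) (zc y 6).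
rewrite /Qf in ea eb *; rewrite !zcD -ea -eb -exprMn.
set Bv := (_ + _ + _ + _ + _ + _ + _).
move=> hB.
have hBv : Bv <= sa * sb.
  have h0 : 0 <= sa * sb by apply: mulr_ge0.
  nra.
have -> : (sa + sb) ^+ 2 = sa ^+ 2 + sb ^+ 2 + 2 * (sa * sb) by ring.
rewrite ea eb /Bv in hBv *.
lra.
Qed.
Lemma zeq x y : (forall k, (k < 7)%N -> zc x k = zc y k) -> x = y.
Proof.
move=> H; apply/rowP => k; have := H k (ltn_ord k); by rewrite /zc inord_val.
Qed.

Variable p : R.

Lemma Kcoords a : Kset p a ->
  [/\ zc a 6 = (zc a 0 ^+ 2 + zc a 1 ^+ 2) / 2,
      zc a 4 = (zc a 0 ^+ 2 - zc a 1 ^+ 2) / 2,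
      zc a 5 = zc a 0 * zc a 1,
      zc a 2 = (zc a 6 + p) * zc a 0 &
      zc a 3 = (zc a 6 + p) * zc a 1].
Proof.
case=> h1 h2.
have e00 := congr1 (fun M : 'M[R]_2 => M ord0 ord0) h1.
have e01 := congr1 (fun M : 'M[R]_2 => M ord0 ord_max) h1.
have e11 := congr1 (fun M : 'M[R]_2 => M ord_max ord_max) h1.
have m0 := congr1 (fun M : 'rV[R]_2 => M ord0 ord0) h2.
have m1 := congr1 (fun M : 'rV[R]_2 => M ord0 ord_max) h2.
move: e00 e01 e11 m0 m1; rewrite /= !mxE !big_ord1 !mxE /=.
rewrite /eof addn0 (_ : (2+1)%N = 3) // mulr1n mulr0n => e00 e01 e11 m0 m1.
by split => //; rewrite ?expr2; lra.
Qed.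
Lemma K_neq a b : Kset p a -> Kset p b -> a != b ->
  zc a 0 != zc b 0 \/ zc a 1 != zc b 1.
Proof.
move=> /Kcoords [a6 a4 a5 a2 a3] /Kcoords [b6 b4 b5 b2 b3] nab.
case: (eqVneq (zc a 0) (zc b 0)) => e0; last by left.
case: (eqVneq (zc a 1) (zc b 1)) => e1; last by right.
exfalso; move/negP: nab; apply; apply/eqP/zeq => k.
have e6 : zc a 6 = zc b 6 by rewrite a6 b6 e0 e1.
do 7 (case: k => [|k]; first by rewrite ?a6 ?b6 ?a4 ?b4 ?a5 ?b5 ?a2 ?b2 ?a3 ?b3 ?e0 ?e1 ?e6).
by [].
Qed.

Lemma wave_diff a b (c : R) : Kset p a -> Kset p b -> a != b -> c != 0 ->
  wave_cone (c *: (a - b)).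
Proof.
move=> Ka Kb nab c0.
have hn := @K_neq a b Ka Kb nab.
move: Ka Kb => /Kcoords [a6 a4 a5 a2 a3] /Kcoords [b6 b4 b5 b2 b3].
split.
  left; apply/negP => /eqP h.
  have h0 := congr1 (fun M : 'rV[R]_2 => M ord0 ord0) h.
  have h1 := congr1 (fun M : 'rV[R]_2 => M ord0 ord_max) h.
  move: h0 h1; rewrite /= !mxE /= !zcZ !zcB => /eqP h0 /eqP h1.
  move: h0 h1; rewrite !mulf_eq0 (negbTE c0) /= !subr_eq0.
  by case: hn => /negbTE -> .
exists (\col_(i < 2) (if (i : nat) == 0%N then zc b 1 - zc a 1 else zc a 0 - zc b 0)).
exists (zc a 1 * zc b 0 - zc a 0 * zc b 1).
split.
  left; apply/negP => /eqP h.
  have h0 := congr1 (fun M : 'cV[R]_2 => M ord0 ord0) h.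
  have h1 := congr1 (fun M : 'cV[R]_2 => M ord_max ord0) h.
  move: h0 h1; rewrite /= !mxE /= => /eqP h0 /eqP h1.
  move: h0 h1; rewrite !subr_eq0.
  by move=> /eqP e1 /eqP e0; case: hn; rewrite ?e0 ?e1 eqxx.
split.
  apply/matrixP => i j; rewrite !mxE !big_ord_recr big_ord0 /= !mxE /=.
  rewrite /eof !zcZ !zcB.
  case: i => [[|[|//]] Hi] /=; rewrite ?mulr1n ?mulr0n.
    by rewrite ?a2 ?a3 ?b2 ?b3 ?a4 ?a5 ?a6 ?b4 ?b5 ?b6; field.
  by rewrite ?a2 ?a3 ?b2 ?b3 ?a4 ?a5 ?a6 ?b4 ?b5 ?b6; field.
split; rewrite !mxE !big_ord_recr big_ord0 /= !mxE /= /eof !zcZ !zcB.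
  ring.
rewrite addn0 (_ : (2+1)%N = 3) //.
by rewrite a2 a3 b2 b3 a6 b6; field.
Qed.
Lemma zc_sum n (F : 'I_n -> Z R) k : zc (\sum_(i < n) F i) k = \sum_(i < n) zc (F i) k.
Proof. by rewrite /zc summxE. Qed.

Lemma dep n (a : 'I_n -> Z R) : (8 < n)%N ->
  exists mu : 'I_n -> R, (exists i, mu i != 0) /\ \sum_i mu i = 0 /\
    \sum_i mu i *: a i = 0.
Proof.
move=> hn.
pose M : 'M[R]_(n, 8) := \matrix_(i, j) (if (j < 7)%N then zc (a i) j else 1).
have hk : kermx M != 0.
  rewrite -mxrank_eq0 mxrank_ker subn_eq0 -ltnNge.
  exact: leq_ltn_trans (rank_leq_col M) hn.
have [i hi] : exists i, row i (kermx M) != 0.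
  case: (pselect (exists i, row i (kermx M) != 0)) => // H.
  exfalso; move/negP: hk; apply; apply/eqP/row_matrixP => j.
  rewrite row0; apply/eqP/negPn/negP => hj; apply: H; by exists j.
pose u := row i (kermx M).
have hu : u *m M = 0 by rewrite /u -row_mul mulmx_ker row0.
exists (fun k => u 0 k); split.
  case: (pselect (exists k, u 0 k != 0)) => // H.
  exfalso; move/negP: hi; apply; apply/eqP/rowP => k.
  rewrite [X in _ = X]mxE; apply/eqP/negPn/negP => hj; apply: H; by exists k.
split.
  have := congr1 (fun v : 'rV[R]_8 => v 0 ord_max) hu.
  rewrite !mxE => h; rewrite -[RHS]h; apply: eq_bigr => k _; by rewrite /M !mxE /= mulr1.
apply/rowP => k; rewrite summxE [RHS]mxE.
have := congr1 (fun v : 'rV[R]_8 => v 0 (widen_ord (isT : (7 <= 8)%N) k)) hu.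
rewrite !mxE => h2; rewrite -[RHS]h2; apply: eq_bigr => j _.
rewrite /M !mxE /= ltn_ord /zc inord_val.
by congr (_ * a j _ k); apply/val_inj.
Qed.
Lemma carath (A : set (Z R)) x : conv_hull A x ->
  exists n (l : 'I_n -> R) (a : 'I_n -> Z R), (n <= 8)%N /\
    (forall i, 0 <= l i) /\ (forall i, A (a i)) /\
    \sum_(i < n) l i = 1 /\ x = \sum_(i < n) l i *: a i.
Proof.
case=> n; elim: n => [|n IH] [l [a [l0 [Aa [s1 ex]]]]].
  by exists 0%N, l, a; do !split.
case: (leqP n.+1 8) => hn; first by exists n.+1, l, a; do !split.
have [mu [[i1 hi1] [smu vmu]]] := @dep _ a hn.
have [j1 hj1] : exists j, 0 < mu j.
  case: (pselect (exists j, 0 < mu j)) => // H; exfalso.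
  have hle : forall i, 0 <= - mu i.
    move=> i; rewrite oppr_ge0 leNgt; apply/negP => h; apply: H; by exists i.
  have hs : \sum_i - mu i = 0 by rewrite sumrN smu oppr0.
  move/negP: hi1; apply; apply/eqP.
  have := @psumr_eq0P _ _ xpredT (fun i => - mu i) (fun i _ => hle i) hs i1 isT.
  by move/eqP; rewrite oppr_eq0 => /eqP.
case: (@arg_minP _ R _ j1 [pred i | 0 < mu i] (fun i => l i / mu i) hj1)
  => i0 hi0 hmin.
set t := l i0 / mu i0.
have t0 : 0 <= t by rewrite /t divr_ge0 ?l0 // ltW.
pose l' i := l i - t * mu i.
have l'0 : forall i, 0 <= l' i.
  move=> i; rewrite /l' subr_ge0.
  case: (ltP 0 (mu i)) => hmu.
    by rewrite -ler_pdivlMr // hmin.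
  by apply: le_trans (l0 i); rewrite mulr_ge0_le0.
have l'i0 : l' i0 = 0 by rewrite /l' /t divfK ?subrr // gt_eqF.
have sl' : \sum_i l' i = 1.
  by rewrite /l' sumrB -mulr_sumr smu mulr0 subr0.
have vl' : x = \sum_i l' i *: a i.
  rewrite /l'; under eq_bigr do rewrite scalerBl -scalerA.
  by rewrite sumrB -scaler_sumr vmu scaler0 subr0.
apply: IH; exists (fun j => l' (lift i0 j)), (fun j => a (lift i0 j)).
split; first by move=> j; apply: l'0.
split; first by move=> j; apply: Aa.
split.
  by move: sl'; rewrite (bigD1_ord i0) //= l'i0 add0r.
by move: vl'; rewrite (bigD1_ord i0) //= l'i0 scale0r add0r.
Qed.
Lemma split_l n m (i : 'I_n) : fintype.split (lshift m i) = inl i.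
Proof. exact: (unsplitK (inl _ i)). Qed.
Lemma split_r n m (i : 'I_m) : fintype.split (rshift n i) = inr i.
Proof. exact: (unsplitK (inr _ i)). Qed.

Lemma conv_convex (A : set (Z R)) P Q (s : R) :
  conv_hull A P -> conv_hull A Q -> 0 <= s <= 1 ->
  conv_hull A ((1 - s) *: P + s *: Q).
Proof.
case=> n [l [a [l0 [Aa [s1 ->]]]]]; case=> m [l' [a' [l0' [Aa' [s1' ->]]]]].
move=> /andP [s0 s1le].
exists (n + m)%N, (fun k => match fintype.split k with inl i => (1 - s) * l i | inr i => s * l' i end),
  (fun k => match fintype.split k with inl i => a i | inr i => a' i end).
split.
  move=> k; case: (fintype.split k) => i; apply: mulr_ge0 => //; by rewrite subr_ge0.
split; first by move=> k; case: (fintype.split k) => i.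
split.
  rewrite big_split_ord /=.
  rewrite (eq_bigr (fun i => (1 - s) * l i)); last by move=> i _; rewrite split_l.
  rewrite [X in _ + X](eq_bigr (fun i => s * l' i)); last by move=> i _; rewrite split_r.
  by rewrite -!mulr_sumr s1 s1' !mulr1 subrK.
rewrite big_split_ord /=.
rewrite [in RHS](eq_bigr (fun i => (1 - s) *: (l i *: a i))); last by move=> i _; rewrite split_l scalerA.
rewrite [X in _ = _ + X](eq_bigr (fun i => s *: (l' i *: a' i))); last by move=> i _; rewrite split_r scalerA.
by rewrite -!scaler_sumr.
Qed.

Lemma znorm_sum n (F : 'I_n -> Z R) : znorm (\sum_i F i) <= \sum_i znorm (F i).
Proof.
elim/big_ind2: _ => //.
- by rewrite znorm0.
- move=> x1 x2 y1 y2 h1 h2; apply: le_trans (znormD _ _) _; exact: lerD.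
Qed.

Lemma seg_int (A : set (Z R)) z w r : 0 < r ->
  (forall u, znorm (u - z) < r -> conv_hull A u) ->
  conv_hull A (z + w) -> conv_hull A (z - w) ->
  forall t : R, -1 <= t <= 1 -> zinterior (conv_hull A) (z + t *: ((3/4) *: w)).
Proof.
move=> r0 hb hp hm t /andP [t1 t2].
exists (r / 4); first by lra.
move=> u hu.
pose s := 3/4 * `|t|.
have hs0 : 0 <= s by rewrite /s mulr_ge0 // ?normr_ge0; lra.
have hs1 : s <= 3/4.
  rewrite /s; have : `|t| <= 1 by rewrite ler_norml t1 t2.
  move=> h; nra.
pose q := if 0 <= t then z + w else z - w.
have hq : conv_hull A q by rewrite /q; case: ifP.
have hy : z + t *: ((3/4) *: w) = z + s *: (q - z).
  rewrite /s /q; case: ifP => ht.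
    by rewrite ger0_norm // addrAC subrr add0r scalerA mulrC.
  rewrite ltr0_norm ?ltNge ?ht //.
  by rewrite addrAC subrr add0r scalerA scalerN -scaleNr mulrN opprK mulrC.
rewrite hy in hu.
pose h := (1 - s)^-1 *: (u - (z + s *: (q - z))).
have hzh : conv_hull A (z + h).
  apply: hb; rewrite addrAC subrr add0r /h znormZ.
  have h1s : 0 < 1 - s by lra.
  rewrite ger0_norm ?invr_ge0 ?ltW //.
  rewrite -(ltr_pM2l h1s) mulrA mulfV ?gt_eqF // mul1r.
  apply: (lt_le_trans hu); nra.
have -> : u = (1 - s) *: (z + h) + s *: q.
  have h1s : 1 - s != 0 by apply/eqP; lra.
  apply: zeq => k _; rewrite /h !(zcD, zcZ, zcB, zcN).
  by field; rewrite ?h1s.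
apply: (@conv_convex A (z + h) q s hzh hq); apply/andP; split; lra.
Qed.
Lemma sum_delta n (j : 'I_n) : \sum_(i < n) ((i == j)%:R : R) = 1.
Proof. by rewrite (bigD1 j) //= eqxx big1 ?addr0 // => i /negbTE ->. Qed.

Lemma sum_deltaZ n (j : 'I_n) (F : 'I_n -> Z R) :
  \sum_(i < n) ((i == j)%:R : R) *: F i = F j.
Proof.
by rewrite (bigD1 j) //= eqxx scale1r big1 ?addr0 // => i /negbTE ->; rewrite scale0r.
Qed.

Lemma conv_single (A : set (Z R)) a0 x :
  (forall b, A b -> b = a0) -> conv_hull A x -> x = a0.
Proof.
move=> H [n [l [a [_ [Aa [s1 ->]]]]]].
under eq_bigr do rewrite (H _ (Aa _)).
by rewrite -scaler_suml s1 scale1r.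
Qed.

Lemma small_coef (r N : R) : 0 < r -> 0 <= N -> r / (2 * (1 + N)) * N < r.
Proof.
move=> r0 N0.
have D0 : 0 < 2 * (1 + N) by lra.
have key : N / (2 * (1 + N)) < 1 by rewrite ltr_pdivrMr //; lra.
have -> : r / (2 * (1 + N)) * N = r * (N / (2 * (1 + N))) by rewrite mulrAC -mulrA.
nra.
Qed.

Lemma coef_pos (r N : R) : 0 < r -> 0 <= N -> 0 < r / (2 * (1 + N)).
Proof. move=> r0 N0; apply: divr_gt0 => //; lra. Qed.

Lemma main (K' : set (Z R)) (hK'K : K' `<=` Kset p) (z : Z R)
  (hz : zinterior (conv_hull K') z) :
  exists2 zb : Z R, wave_cone zb &
    (forall t : R, -1 <= t <= 1 -> zinterior (conv_hull K') (z + t *: zb)) /\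
    (2 * dimZ%:R)^-1 * zdist z K' <= znorm zb.
Proof.
case: hz => r r0 hb.
have hz : conv_hull K' z by apply: hb; rewrite subrr znorm0.
have [n [l [a [n8 [l0 [Aa [s1 ex]]]]]]] := @carath K' z hz.
case: n l a n8 l0 Aa s1 ex => [|n] l a n8 l0 Aa s1 ex.
  by move: s1; rewrite big_ord0 => /eqP; rewrite eq_sym oner_eq0.
have [i1 _ hi1] := @arg_maxP _ R _ ord0 xpredT l isT.
pose f i := znorm (l i *: (a i - a i1)).
have [j _ hj] := @arg_maxP _ R _ ord0 xpredT f isT.
have ez : z - a i1 = \sum_i l i *: (a i - a i1).
  under eq_bigr do rewrite scalerBr.
  by rewrite sumrB -scaler_suml s1 scale1r -ex.
have hd : zdist z K' <= znorm (z - a i1).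
  rewrite /zdist; apply: ge_inf; last by exists (a i1).
  by exists 0 => y [k _ <-]; apply: znorm_ge0.
have hsum : znorm (z - a i1) <= n.+1%:R * f j.
  rewrite ez; apply: le_trans (znorm_sum _ _) _.
  apply: (@le_trans _ _ (\sum_(i < n.+1) f j)).
    by apply: ler_sum => i _; apply: hj.
  by rewrite sumr_const card_ord mulr_natl.
have n8' : (n.+1%:R : R) <= 8%:R by rewrite ler_nat.
have fj0 : 0 <= f j by apply: znorm_ge0.
rewrite /dimZ.
case: (ltP 0 (f j)) => hfj.
  pose w := l j *: (a j - a i1).
  have naj : a j != a i1.
    by apply/eqP => e; move: hfj; rewrite /f e subrr scaler0 znorm0 ltxx.
  have lj0 : l j != 0.
    by apply/eqP => e; move: hfj; rewrite /f e scale0r znorm0 ltxx.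
  have hc : forall c : R, -1 <= c <= 1 -> conv_hull K' (z + c *: w).
    move=> c /andP [c1 c2].
    exists n.+1, (fun i => l i + c * l j * ((i == j)%:R - (i == i1)%:R)), a.
    split.
      move=> i; have hlj := l0 j; have hli := l0 i; have hm : l j <= l i1 := hi1 j isT.
      have hli1 := l0 i1.
      case: (eqVneq i j) => [->|nij].
        rewrite ?eqxx; case: (eqVneq j i1) => [e|ne].
          by rewrite ?eqxx subrr mulr0 addr0.
        rewrite ?(negbTE ne) subr0 mulr1; nra.
      rewrite ?(negbTE nij); case: (eqVneq i i1) => [->|ni].
        rewrite ?eqxx sub0r mulrN1; nra.
      by rewrite ?(negbTE ni) subrr mulr0 addr0.
    split; first by [].
    split.
      by rewrite big_split /= -mulr_sumr sumrB !sum_delta subrr mulr0 addr0.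
    under eq_bigr do rewrite scalerDl.
    rewrite big_split /= -ex.
    under eq_bigr do rewrite -scalerA.
    rewrite -scaler_sumr.
    under eq_bigr do rewrite scalerBl.
    by rewrite sumrB !sum_deltaZ /w scalerA.
  have hzw : conv_hull K' (z + w).
    by have := hc 1; rewrite scale1r; apply; apply/andP; split; lra.
  have hzmw : conv_hull K' (z - w).
    by have := hc (-1); rewrite scaleN1r; apply; apply/andP; split; lra.
  exists ((3/4) *: w).
    rewrite /w scalerA; apply: wave_diff => //; [exact: hK'K | exact: hK'K |].
    by rewrite mulf_neq0.
  split; first exact: (@seg_int K' z w r r0 hb hzw hzmw).
  rewrite znormZ ger0_norm; last by lra.
  rewrite -/(f j).
  have : zdist z K' <= 8 * f j by apply: (le_trans hd); apply: (le_trans hsum); apply: ler_wpM2r.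
  move=> h; lra.
have hd0 : zdist z K' <= 0.
  apply: (le_trans hd); apply: (le_trans hsum); nra.
case: (pselect (exists b, K' b /\ b != a i1)) => [[b [Kb nb]] | H].
  have hN := znorm_ge0 (b - a i1).
  pose e := r / (2 * (1 + znorm (b - a i1))).
  have e0 : 0 < e by apply: coef_pos.
  pose w := e *: (b - a i1).
  have hw : znorm w < r.
    by rewrite /w znormZ ger0_norm ?ltW //; apply: small_coef.
  have hzw : conv_hull K' (z + w) by apply: hb; rewrite addrAC subrr add0r.
  have hzmw : conv_hull K' (z - w) by apply: hb; rewrite addrAC subrr add0r znormN.
  exists ((3/4) *: w).
    rewrite /w scalerA; apply: wave_diff => //; [exact: hK'K | exact: hK'K |].
    by rewrite mulf_neq0 ?gt_eqF.
  split; first exact: (@seg_int K' z w r r0 hb hzw hzmw).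
  have := znorm_ge0 ((3/4) *: w); lra.
exfalso.
have Hall : forall b, K' b -> b = a i1.
  move=> b Kb; apply/eqP; apply/negPn/negP => nb; apply: H; by exists b.
pose e0 : Z R := const_mx 1.
have Q0 : 0 < znorm e0.
  rewrite znormE sqrtr_gt0 /Qf /zc !mxE; lra.
pose c := r / (2 * (1 + znorm e0)).
have c0 : 0 < c by apply: coef_pos => //; apply: ltW.
pose h := c *: e0.
have hh : znorm h < r.
  by rewrite /h znormZ ger0_norm ?ltW //; apply: small_coef => //; apply: ltW.
have hzh : conv_hull K' (z + h) by apply: hb; rewrite addrAC subrr add0r.
have e1 := @conv_single K' (a i1) _ Hall hzh.
have e2 := @conv_single K' (a i1) _ Hall hz.
have : h = 0 by rewrite -[h](addKr z) e1 e2 addNr.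
move=> h0; move: hh; rewrite h0 => _.
have : 0 < znorm h by rewrite /h znormZ ger0_norm ?ltW // mulr_gt0.
by rewrite h0 znorm0 ltxx.
Qed.
End S.

Theorem corollary2p4 (R : realType) (p : R) (K' : set (Z R))
  (hK'K : K' `<=` Kset p) (hK'c : compact K') (z : Z R)
  (hz : zinterior (conv_hull K') z) :
  exists2 zb : Z R, wave_cone zb &
    (forall t : R, -1 <= t <= 1 -> zinterior (conv_hull K') (z + t *: zb)) /\
    (2 * dimZ%:R)^-1 * zdist z K' <= znorm zb.
Proof. exact: (@main R p K' hK'K z hz). Qed.
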